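(* Let $q$ be a prime power with $q\equiv 3\pmod 4$, let $G=S_{q^2}$ be the symmetric group on the set $\mathbb{F}_q^2$, and let $H=\mathrm{AGL}_2(q)<G$ be the affine group acting naturally on $\mathbb{F}_q^2$. Then $H$ is a perfect code of $G$.
   Context: All groups are finite. For a group $G$ with identity $e$ and an inverse-closed subset $S\subseteq G\setminus\{e\}$, the Cayley graph $\mathrm{Cay}(G,S)$ has vertex set $G$ and edges $\{g,sg\}$ for $s\in S$, $g\in G$. A perfect code in a graph is an independent set $C$ of vertices such that every vertex outside $C$ is adjacent to exactly one vertex of $C$. A subgroup $H$ of $G$ is a perfect code of $G$ if some Cayley graph of $G$ admits $H$ as a perfect code. *)

(* Defs.v *)
From HB Require Import structures.
From mathcomp Require Import all_boot all_order all_algebra all_fingroup.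
Import GRing.Theory.
Local Open Scope ring_scope.
Set Implicit Arguments. Unset Strict Implicit. Unset Printing Implicit Defensive.
Import GRing.Theory.
Local Open Scope group_scope.

(* Cayley graph Cay(G,S): vertex set G, edges {g, s g} for s in S.
   So g and h are adjacent iff h * g^-1 \in S (symmetric as S = S^-1). *)
Definition cay_adj (gT : finGroupType) (S : {set gT}) (g h : gT) : bool :=
  h * g^-1 \in S.

Definition connection_set (gT : finGroupType) (G S : {set gT}) : Prop :=
  S \subset G :\ 1 /\ (forall s, s \in S -> s^-1 \in S).

Definition perfect_code_in_cay (gT : finGroupType) (G S C : {set gT}) : Prop :=
  [/\ C \subset G,
      (forall c1 c2, c1 \in C -> c2 \in C -> ~~ cay_adj S c1 c2) &
      (forall g, g \in G :\: C -> #|[set c in C | cay_adj S g c]| = 1%N)].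

Definition subgroup_perfect_code (gT : finGroupType) (G H : {set gT}) : Prop :=
  exists S : {set gT}, connection_set G S /\ perfect_code_in_cay G S H.

Definition AGL2 (F : finFieldType) : {set {perm 'rV[F]_2}} :=
  [set s : {perm 'rV[F]_2} | [exists A : 'M[F]_2, [exists b : 'rV[F]_2,
      (A \in unitmx) && [forall x, s x == (x *m A + b)%R]]]].

(* Main.v *)
Require Import Defs.
From HB Require Import structures.
From mathcomp Require Import all_boot all_order all_algebra all_fingroup.
From mathcomp Require Import cyclic pgroup zify.
Set Implicit Arguments. Unset Strict Implicit. Unset Printing Implicit Defensive.
Import GRing.Theory.

Section GenAll.
Local Open Scope group_scope.

Lemma half_split (T : finType) n : forall S : {set T}, #|S| = n.*2 ->
  exists A B : {set T}, [/\ (forall z, z \in A -> z \notin B), A :|: B = S, #|A| = n & #|B| = n].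
Proof.
elim: n => [|n IH] S hS.
  exists set0, set0; split; [by move=> z; rewrite inE | | by rewrite cards0 | by rewrite cards0].
  by rewrite set0U; apply/esym/eqP; rewrite -cards_eq0 hS.

have /card_gt0P [a aS] : 0 < #|S| by rewrite hS doubleS.
have hS1 : #|S :\ a| = n.*2.+1 by rewrite (cardsD1 a S) aS in hS; case: hS.
have /card_gt0P [b bS] : 0 < #|S :\ a| by rewrite hS1.
have hS2 : #|S :\ a :\ b| = n.*2 by rewrite (cardsD1 b (S :\ a)) bS in hS1; case: hS1.
have [A [B [dAB UAB cA cB]]] := IH _ hS2.
move: (bS); rewrite !inE => /andP [ba aS'].
have aAB : a \notin A :|: B by rewrite UAB !inE eqxx andbF.
have bAB : b \notin A :|: B by rewrite UAB !inE eqxx.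
have aA : a \notin A by apply: contra aAB => h; rewrite inE h.
have aB : a \notin B by apply: contra aAB => h; rewrite inE h orbT.
have bA : b \notin A by apply: contra bAB => h; rewrite inE h.
have bB : b \notin B by apply: contra bAB => h; rewrite inE h orbT.
exists (a |: A), (b |: B); split.
- move=> z; rewrite !inE => /predU1P [->|zA]; apply/predU1P => [[zb|zB]].
  + by move: ba; rewrite zb eqxx.
  + by move: aB; rewrite zB.
  + by move: bA; rewrite -zb zA.
  + by move: (dAB z zA); rewrite zB.
- apply/setP => z; rewrite !inE.
  have := UAB; move/setP /(_ z); rewrite !inE => h.
  case: (z =P a) => [->|za] /=; first by rewrite aS.
  case: (z =P b) => [->|zb] /=; first by rewrite aS' orbT.
  by rewrite h; move/eqP: za => /negPf ->; move/eqP: zb => /negPf ->.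
- by rewrite cardsU1 (negPf aA) cA.
- by rewrite cardsU1 (negPf bB) cB.
Qed.

Section Cos.
Variable gT : finGroupType.
Variable R : {group gT}.

Definition dc (x : gT) := [set r1 * x * r2 | r1 in R, r2 in R].

Lemma mem_dc x r1 r2 : r1 \in R -> r2 \in R -> r1 * x * r2 \in dc x.
Proof. by move=> h1 h2; apply/imset2P; exists r1 r2. Qed.

Lemma dc_self x : x \in dc x.
Proof. by have := mem_dc x (group1 R) (group1 R); rewrite mulg1 mul1g. Qed.

Lemma dc_trans x y : y \in dc x -> dc y = dc x.
Proof.
case/imset2P => a b aR bR ->; apply/setP => z; apply/imset2P/imset2P.
  case=> c d cR dR ->; exists (c * a) (b * d); rewrite ?groupM //.
  by rewrite !mulgA.
case=> c d cR dR ->; exists (c * a^-1) (b^-1 * d); rewrite ?groupM ?groupV //.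
by rewrite !mulgA mulgK -(mulgA _ a^-1) mulVg mulg1.
Qed.

Lemma dc_sym x y : y \in dc x -> x \in dc y.
Proof. by move=> h; rewrite (dc_trans h) dc_self. Qed.

Lemma dcV x z : (z \in dc x^-1) = (z^-1 \in dc x).
Proof.
apply/imset2P/imset2P.
  case=> a b aR bR ->; exists b^-1 a^-1; rewrite ?groupV //.
  by rewrite !invMg invgK mulgA.
case=> a b aR bR h; exists b^-1 a^-1; rewrite ?groupV //.
by rewrite -[z]invgK h !invMg mulgA.
Qed.

Lemma dc1 : dc 1 = R.
Proof.
apply/setP => z; apply/imset2P/idP.
  by case=> a b aR bR ->; rewrite mulg1 groupM.
by move=> zR; exists z 1; rewrite ?mulg1.
Qed.

Lemma dcMr x k r : k \in dc x -> r \in R -> k * r \in dc x.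
Proof.
case/imset2P => a b aR bR -> rR; rewrite -mulgA; exact: mem_dc (groupM bR rR).
Qed.

Lemma dcMl x k r : k \in dc x -> r \in R -> r * k \in dc x.
Proof.
case/imset2P => a b aR bR -> rR; rewrite !mulgA; apply: mem_dc => //.
exact: groupM.
Qed.

Lemma rcoset_dc x k : k \in dc x -> R :* k \subset dc x.
Proof. by move=> kD; apply/subsetP => z /rcosetP [r rR ->]; apply: dcMl. Qed.

Lemma dc_disj x y z : z \in dc x -> z \in dc y -> dc x = dc y.
Proof. by move=> h1 h2; rewrite -(dc_trans h1) (dc_trans h2). Qed.

Lemma dc_cross x k1 k2 : k1 \in dc x -> k2^-1 \in dc x ->
  exists2 t, t \in R :* k1 & t^-1 \in R :* k2.
Proof.
move=> h1; rewrite -(dc_trans h1) => /imset2P [a b aR bR e].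
exists (a * k1); first by rewrite mem_rcoset mulgK.
by rewrite mem_rcoset e mulKg.
Qed.


Definition Cs := rcosets R [set: gT].

Lemma cos_eq A C z : A \in Cs -> C \in Cs -> z \in A -> z \in C -> A = C.
Proof.
case/rcosetsP=> a _ -> /rcosetsP [c _ ->] /rcoset_eqP za /rcoset_eqP zc.
by rewrite -za -zc.
Qed.

Lemma L1 n : forall Oa Ob : {set {set gT}}, #|Oa| = n -> #|Ob| = n ->
  (forall C, C \in Oa -> C \notin Ob) -> Oa \subset Cs -> Ob \subset Cs ->
  (forall A B, A \in Oa -> B \in Ob -> exists2 t, t \in A & t^-1 \in B) ->
  exists T : {set gT}, [/\ forall t, t \in T -> t^-1 \in T,
     forall t, t \in T -> exists2 C, C \in Oa :|: Ob & t \in C &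
     forall C, C \in Oa :|: Ob -> #|T :&: C| = 1%N].
Proof.
elim: n => [|n IH] Oa Ob ca cb dab sa sb hP.
  exists set0; split=> [t|t|C]; rewrite ?inE //.
  by move: ca cb => /eqP; rewrite cards_eq0 => /eqP -> /eqP; rewrite cards_eq0 => /eqP ->; rewrite !inE.
have /card_gt0P [A AO] : (0 < #|Oa|)%N by rewrite ca.
have /card_gt0P [B BO] : (0 < #|Ob|)%N by rewrite cb.
have [t tA tB] := hP A B AO BO.
have ca' : #|Oa :\ A| = n by rewrite (cardsD1 A Oa) AO in ca; case: ca.
have cb' : #|Ob :\ B| = n by rewrite (cardsD1 B Ob) BO in cb; case: cb.
have [||||T [TV Tin T1]] := IH (Oa :\ A) (Ob :\ B) ca' cb'.
- by move=> C; rewrite !inE => /andP [_ /dab /negPf ->]; rewrite andbF.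
- by apply: subset_trans sa; apply: subsetDl.
- by apply: subset_trans sb; apply: subsetDl.
- by move=> A' B'; rewrite !inE => /andP [_ ?] /andP [_ ?]; apply: hP.
have AC : A \in Cs by apply: (subsetP sa).
have BC : B \in Cs by apply: (subsetP sb).
have AB : A != B by apply/eqP => e; move: (dab A AO); rewrite e BO.
have TnA z : z \in T -> z \notin A.
  move=> /Tin [C]; rewrite !inE => CO zC; apply/negP => zA.
  have CC : C \in Cs by move: CO => /orP [/andP [_ h]|/andP [_ h]]; [apply: (subsetP sa) h | apply: (subsetP sb) h].
  have e := cos_eq AC CC zA zC; move: CO; rewrite -e eqxx /= => /andP [_ h].
  by move: (dab A AO); rewrite h.
have TnB z : z \in T -> z \notin B.
  move=> /Tin [C]; rewrite !inE => CO zC; apply/negP => zB.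
  have CC : C \in Cs by move: CO => /orP [/andP [_ h]|/andP [_ h]]; [apply: (subsetP sa) h | apply: (subsetP sb) h].
  have e := cos_eq BC CC zB zC; move: CO; rewrite -e eqxx /= orbF => /andP [_ h].
  by move: (dab B h); rewrite BO.
have tnB : t \notin B by apply/negP => h; move/eqP: AB; apply; apply: cos_eq AC BC tA h.
have tVnA : t^-1 \notin A by apply/negP => h; move/eqP: AB; apply; apply: cos_eq AC BC h tB.
exists (t |: (t^-1 |: T)); split.
- move=> z; rewrite !inE => /predU1P [->|/predU1P [->|zT]]; first by rewrite eqxx orbT.
    by rewrite invgK eqxx.
  by rewrite TV ?orbT.
- move=> z; rewrite !inE => /predU1P [->|/predU1P [->|zT]].
  + by exists A; rewrite // !inE AO.
  + by exists B; rewrite // !inE BO orbT.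
  + have [C CO zC] := Tin z zT; exists C => //; move: CO; rewrite !inE.
    by case/orP => /andP [_ ->]; rewrite ?orbT.
- move=> C CO.
  have CC : C \in Cs by move: CO => /setUP [h|h]; [apply: (subsetP sa) h | apply: (subsetP sb) h].
  case: (C =P A) => [->|CA].
    suff -> : (t |: (t^-1 |: T)) :&: A = [set t] by rewrite cards1.
    apply/setP => z; rewrite !inE; case: (z =P t) => [->|zt] /=; first by rewrite tA.
    case: (z =P t^-1) => [->|_] /=; first by rewrite (negPf tVnA).
    by case zT: (z \in T) => //=; rewrite (negPf (TnA z zT)).
  case: (C =P B) => [->|CB].
    suff -> : (t |: (t^-1 |: T)) :&: B = [set t^-1] by rewrite cards1.
    apply/setP => z; rewrite !inE; case: (z =P t) => [->|zt] /=.
      by rewrite (negPf tnB); apply/esym/negP => /eqP ht; move: tnB; rewrite {1}ht tB.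
    case: (z =P t^-1) => [->|zt'] /=; first by rewrite tB.
    by case zT: (z \in T) => //=; rewrite (negPf (TnB z zT)).
  have CO' : C \in (Oa :\ A) :|: (Ob :\ B).
    by move: CO; rewrite !inE; move/eqP: CA => /negPf ->; move/eqP: CB => /negPf ->.
  have tnC : t \notin C by apply/negP => tC; apply: CA; apply/esym/(cos_eq AC CC tA tC).
  have tVnC : t^-1 \notin C by apply/negP => tC; apply: CB; apply/esym/(cos_eq BC CC tB tC).
  rewrite -(T1 C CO'); apply: eq_card => z; rewrite !inE.
  case: (z =P t) => [->|_]; first by rewrite (negPf tnC) !andbF.
  by case: (z =P t^-1) => [->|_]; first by rewrite (negPf tVnC) !andbF.
Qed.

Lemma L2 (O : {set {set gT}}) : ~~ odd #|O| -> O \subset Cs ->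
  (forall A B, A \in O -> B \in O -> exists2 t, t \in A & t^-1 \in B) ->
  exists T : {set gT}, [/\ forall t, t \in T -> t^-1 \in T,
     forall t, t \in T -> exists2 C, C \in O & t \in C &
     forall C, C \in O -> #|T :&: C| = 1%N].
Proof.
move=> ev sO hP.
have [A [B [dAB UAB cA cB]]] := half_split (esym (even_halfK ev)).
have sA : A \subset O by rewrite -UAB subsetUl.
have sB : B \subset O by rewrite -UAB subsetUr.
have [T [TV Tin T1]] := L1 cA cB dAB (subset_trans sA sO) (subset_trans sB sO)
   (fun A' B' hA hB => hP A' B' (subsetP sA _ hA) (subsetP sB _ hB)).
by exists T; split=> //; rewrite -UAB.
Qed.

Lemma mulR_dc x : R * dc x = dc x.
Proof.
apply/setP => z; apply/mulsgP/idP.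
  by case=> r k rR kD ->; apply: dcMl.
by move=> zD; exists 1 z; rewrite ?group1 ?mul1g.
Qed.

Lemma rcosets_partition_mul_set (G : {set gT}) : partition (rcosets R G) (R * G).
Proof.
set HG := R * G; have sGHG: {subset G <= HG} by apply/subsetP/mulG_subr.
have defHx x: x \in HG -> [set y in HG | rcoset R x == rcoset R y] = R :* x.
  move=> HGx; apply/setP=> y; rewrite inE !rcosetE (sameP eqP rcoset_eqP).
  by rewrite rcoset_sym; apply/andb_idl/subsetP; rewrite mulGS sub1set.
have:= preim_partitionP (rcoset R) HG; congr (partition _ _); apply/setP=> Hx.
apply/imsetP/idP=> [[x HGx ->] | ]; first by rewrite defHx // mem_rcosets.
by case/rcosetsP=> x /sGHG-HGx ->; exists x; rewrite ?defHx.
Qed.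

Lemma card_rc x : #|dc x| = (#|rcosets R (dc x)| * #|R|)%N.
Proof.
rewrite -{1}mulR_dc; apply: card_uniform_partition; last exact: rcosets_partition_mul_set.
by move=> C /rcosetsP [k _ ->]; rewrite card_rcoset.
Qed.

Lemma card_dcV x : #|rcosets R (dc x^-1)| = #|rcosets R (dc x)|.
Proof.
have e : dc x^-1 = (dc x)^-1 by apply/setP => z; rewrite mem_invg dcV.
have := card_rc x^-1; rewrite e card_invg card_rc => /eqP.
by rewrite eqn_pmul2r ?cardG_gt0 // => /eqP.
Qed.

Lemma rcosets_sub x : rcosets R (dc x) \subset Cs.
Proof. by apply/subsetP => C /rcosetsP [k _ ->]; apply/rcosetsP; exists k. Qed.

Lemma cross_rc x A B : A \in rcosets R (dc x) -> B \in rcosets R (dc x^-1) ->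
  exists2 t, t \in A & t^-1 \in B.
Proof.
case/rcosetsP => k1 k1D -> /rcosetsP [k2 k2D ->].
by apply: (dc_cross k1D); rewrite -dcV.
Qed.

Lemma in_rc x C t : C \in rcosets R (dc x) -> t \in C -> t \in dc x.
Proof. by case/rcosetsP => k kD -> tC; apply: (subsetP (rcoset_dc kD)). Qed.

Lemma rc_in x k : k \in dc x -> R :* k \in rcosets R (dc x).
Proof. by move=> kD; apply/rcosetsP; exists k. Qed.

Hypothesis INV : forall x, x \notin R -> x^-1 \in dc x ->
  exists2 t, t \in dc x & t * t = 1.

Lemma dcR x : x \notin R -> forall z, z \in dc x -> z \notin R.
Proof.
move=> xR z zD; apply/negP => zR; move: xR.
have : z \in dc 1 by rewrite dc1.
by move/(dc_disj zD) => e; rewrite -dc1 -e dc_self.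
Qed.

Lemma step x : exists TD : {set gT}, [/\ TD \subset dc x :|: dc x^-1,
   forall t, t \in TD -> t^-1 \in TD,
   forall k, k \in dc x :|: dc x^-1 -> #|TD :&: R :* k| = 1%N &
   forall t, t \in TD -> t \in R -> t = 1].
Proof.
case: (boolP (x \in R)) => xR.
  have ex : dc x = R by rewrite -dc1; apply: dc_trans; rewrite dc1.
  have exV : dc x^-1 = R by rewrite -dc1; apply: dc_trans; rewrite dc1 groupV.
  exists [set 1]; rewrite ex exV setUid; split.
  - by rewrite sub1set group1.
  - by move=> t; rewrite inE => /eqP ->; rewrite invg1 inE.
  - move=> k kR; rewrite rcoset_id //.
    have -> : [set 1] :&: R = [set 1] by apply/setIidPl; rewrite sub1set group1.
    exact: cards1.
  - by move=> t; rewrite inE => /eqP.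
have xVR : x^-1 \notin R by rewrite groupV.
have noR : forall t, t \in dc x :|: dc x^-1 -> t \notin R.
  by move=> t /setUP [h|h]; [apply: (dcR xR) | apply: (dcR xVR)].
case: (boolP (x^-1 \in dc x)) => xVD; last first.
  have disj : forall C, C \in rcosets R (dc x) -> C \notin rcosets R (dc x^-1).
    move=> C /rcosetsP [k kD ->]; apply/negP => /rcosetsP [k' k'D e].
    have kD' : k \in dc x^-1 by apply: in_rc (rc_in k'D) _; rewrite -e rcoset_refl.
    by move: xVD; rewrite (dc_disj kD kD') dc_self.
  have [T [TV Tin T1]] := L1 (esym (card_dcV x)) (erefl _) disj (rcosets_sub x)
     (rcosets_sub x^-1) (@cross_rc x).
  exists T; split => //.
  - apply/subsetP => t /Tin [C /setUP [h|h] tC]; rewrite inE.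
      by rewrite (in_rc h tC).
    by rewrite (in_rc h tC) orbT.
  - by move=> k /setUP [h|h]; apply: T1; rewrite inE (rc_in h) ?orbT.
  - move=> t tT tR; have /Tin [C /setUP [h|h] tC] := tT.
      by move: (dcR xR (in_rc h tC)); rewrite tR.
    by move: (dcR xVR (in_rc h tC)); rewrite tR.
have eV : dc x^-1 = dc x by apply: dc_trans.
rewrite eV setUid.
have [t tD tt] := INV xR xVD.
have tV : t^-1 = t by apply/eqP; rewrite eq_invg_mul tt.
have crossS : forall A B, A \in rcosets R (dc x) -> B \in rcosets R (dc x) ->
    exists2 t, t \in A & t^-1 \in B.
  by move=> A B hA hB; apply: cross_rc hA _; rewrite eV.
case: (boolP (odd #|rcosets R (dc x)|)) => par; last first.
  have [T [TV Tin T1]] := L2 par (rcosets_sub x) crossS.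
  exists T; split => //.
  - by apply/subsetP => z /Tin [C h zC]; apply: in_rc h zC.
  - by move=> k kD; apply: T1; apply: rc_in.
  - move=> z /Tin [C h zC] zR.
    by move: (dcR xR (in_rc h zC)); rewrite zR.
set O := rcosets R (dc x) in par crossS *.
have tO : R :* t \in O by apply: rc_in.
have par' : ~~ odd #|O :\ (R :* t)| by rewrite (cardsD1 (R :* t) O) tO /= in par.
have sO : O :\ (R :* t) \subset Cs by apply: subset_trans (subsetDl _ _) (rcosets_sub x).
have [T [TV Tin T1]] := L2 par' sO
   (fun A B hA hB => crossS A B (subsetP (subsetDl _ _) _ hA) (subsetP (subsetDl _ _) _ hB)).
have tnT : forall z, z \in T -> z \notin R :* t.
  move=> z /Tin [C]; rewrite !inE => /andP [Ct CO] zC; apply/negP => zt.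
  move: Ct; rewrite (cos_eq (subsetP (rcosets_sub x) _ CO) (subsetP (rcosets_sub x) _ tO) zC zt).
  by rewrite eqxx.
exists (t |: T); split.
- apply/subsetP => z /setU1P [->//|/Tin [C h zC]].
  by apply: in_rc zC; apply: (subsetP (subsetDl _ _) _ h).
- by move=> z; rewrite !inE => /predU1P [->|zT]; rewrite ?tV ?eqxx // TV ?orbT.
- move=> k kD.
  case: (R :* k =P R :* t) => [->|kt].
    suff -> : (t |: T) :&: R :* t = [set t] by rewrite cards1.
    apply/setP => z; rewrite !inE; case: (z =P t) => [->|_] /=; first by rewrite rcoset_refl.
    by case zT: (z \in T) => //=; rewrite (negPf (tnT z zT)).
  have kO : R :* k \in O :\ (R :* t) by rewrite !inE rc_in // andbT; apply/eqP.
  rewrite -(T1 _ kO); apply: eq_card => z; rewrite !inE.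
  case: (z =P t) => [->|_] //=.
  case tk: (t \in R :* k); last by rewrite andbF.
  by exfalso; apply: kt; apply: cos_eq (rcoset_refl R t) => //;
    [apply: (subsetP (rcosets_sub x)); apply: rc_in | apply: (subsetP (rcosets_sub x))].
- move=> z /setU1P [->|/Tin [C h zC]] zR.
    by move: (dcR xR tD); rewrite zR.
  by move: (dcR xR (in_rc (subsetP (subsetDl _ _) _ h) zC)); rewrite zR.
Qed.

Lemma main_ind n : forall X : {set gT}, #|X| <= n ->
  (forall x, x \in X -> dc x \subset X) -> (forall x, x \in X -> x^-1 \in X) ->
  exists T : {set gT}, [/\ T \subset X, forall t, t \in T -> t^-1 \in T,
     forall k, k \in X -> #|T :&: R :* k| = 1%N &
     forall t, t \in T -> t \in R -> t = 1].
Proof.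
elim: n => [|n IH] X cX dX iX.
  exists set0; split; [exact: sub0set| by move=> t; rewrite inE | | by move=> t; rewrite inE].
  by move: cX; rewrite leqn0 cards_eq0 => /eqP -> k; rewrite inE.
case: (set_0Vmem X) => [->|[x xX]].
  exists set0; split; [exact: sub0set| by move=> t; rewrite inE | | by move=> t; rewrite inE].
  by move=> k; rewrite inE.
set Dx := dc x :|: dc x^-1.
have sDX : Dx \subset X by rewrite subUset dX // dX // iX.
have inDx : forall y z, z \in dc y -> y \in Dx -> z \in Dx.
  move=> y z zy; rewrite !inE => /orP [h|h].
    by rewrite -(dc_trans h) zy.
  by rewrite -(dc_trans h) zy orbT.
have [|||T' [sT' T'V T'1 T'R]] := IH (X :\: Dx).
- rewrite -ltnS; apply: leq_trans cX; apply: proper_card; apply/properP; split.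
    exact: subsetDl.
  by exists x => //; rewrite !inE dc_self.
- move=> y; rewrite inE => /andP [yD yX]; apply/subsetP => z zy.
  rewrite inE (subsetP (dX y yX)) // andbT; apply/negP => zD.
  by move: yD; rewrite (inDx z y (dc_sym zy) zD).
- move=> y; rewrite inE => /andP [yD yX]; rewrite inE iX // andbT.
  apply: contra yD; rewrite !inE !dcV invgK => /orP [h|h]; first by rewrite h orbT.
  by move: h; rewrite -[x in _ \in dc x]invgK -dcV invgK => ->.
have [TD [sTD TDV TD1 TDR]] := step x.
have T'nD : forall z, z \in T' -> z \notin Dx.
  by move=> z /(subsetP sT'); rewrite inE => /andP [].
exists (T' :|: TD); split.
- by rewrite subUset (subset_trans sT' (subsetDl _ _)) (subset_trans sTD sDX).
- by move=> t /setUP [h|h]; rewrite inE; [rewrite T'V | rewrite TDV ?orbT].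
- move=> k kX; case: (boolP (k \in Dx)) => kD.
    rewrite -(TD1 k kD); apply: eq_card => z; rewrite !inE.
    case zk: (z \in R :* k); rewrite ?andbF // !andbT.
    have zD : z \in Dx by apply: inDx kD; apply: (subsetP (rcoset_dc (dc_self k))).
    by case zT: (z \in T') => //; move: (T'nD z zT); rewrite zD.
  have kX' : k \in X :\: Dx by rewrite inE kD.
  rewrite -(T'1 k kX'); apply: eq_card => z; rewrite !inE.
  case zk: (z \in R :* k); rewrite ?andbF // !andbT.
  case zTD: (z \in TD); rewrite ?orbT ?orbF //.
  have zD : z \in Dx by apply: (subsetP sTD).
  have zdk : z \in dc k by apply: (subsetP (rcoset_dc (dc_self k))).
  by move: kD; rewrite (inDx z k (dc_sym zdk) zD).
- by move=> t /setUP [h|h]; [apply: T'R | apply: TDR].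
Qed.

Lemma perfect_transversal (K : {group gT}) : R \subset K ->
  exists T : {set gT}, [/\ T \subset K, forall t, t \in T -> t^-1 \in T,
     forall k, k \in K -> #|T :&: R :* k| = 1%N &
     forall t, t \in T -> t \in R -> t = 1].
Proof.
move=> sRK; apply: (@main_ind #|K|) => //.
  move=> x xK; apply/subsetP => z /imset2P [a b aR bR ->].
  by rewrite !groupM // (subsetP sRK).
by move=> x; rewrite groupV.
Qed.


End Cos.

End GenAll.

Section Lin.
Local Open Scope ring_scope.
Variable F : finFieldType.
Local Notation V := 'rV[F]_2.

Lemma det2 (A : 'M[F]_2) : \det A = A 0 0 * A 1 1 - A 0 1 * A 1 0.
Proof.
rewrite (expand_det_row _ 0) !big_ord_recl big_ord0 /cofactor !det_mx11 !mxE /=.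
have l1 : lift (0 : 'I_2) (0 : 'I_1) = 1 by apply: val_inj.
have l3 : lift (1 : 'I_2) (0 : 'I_1) = 0 by apply: val_inj.
have o0 : (ord0 : 'I_2) = 0 by apply: val_inj.
rewrite o0 l1 l3 /bump /= expr0 expr1 !mul1r addr0 mulN1r mulrN.
by rewrite (mulrC (A 0 1)).
Qed.

Lemma ord2 (j : 'I_2) : j = 0 \/ j = 1.
Proof. by case: j => [[|[|//]] hj]; [left|right]; apply: val_inj. Qed.

Definition e1 : V := delta_mx 0 0.

Lemma e1_00 : e1 0 0 = 1. Proof. by rewrite mxE. Qed.
Lemma e1_01 : e1 0 1 = 0. Proof. by rewrite mxE. Qed.

Lemma e1_neq0 : e1 != 0.
Proof. by apply/eqP => /rowP /(_ 0); rewrite e1_00 mxE; apply/eqP; exact: oner_neq0. Qed.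

Lemma decomp0 (p : V) : p 0 1 = 0 -> p = p 0 0 *: e1.
Proof.
move=> h; apply/rowP => j; rewrite mxE.
by case: (ord2 j) => ->; rewrite ?e1_00 ?e1_01 ?mulr1 ?mulr0 ?h.
Qed.

Lemma decomp (p v : V) : p 0 1 != 0 ->
  exists a b, v = a *: e1 + b *: p.
Proof.
move=> hp; exists (v 0 0 - v 0 1 / p 0 1 * p 0 0), (v 0 1 / p 0 1).
apply/rowP => j; rewrite !mxE.
  case: (ord2 j) => ->; rewrite ?e1_00 ?e1_01 ?mulr1 ?mulr0 ?add0r ?addr0.
  by rewrite subrK.
by rewrite divfK.
Qed.

Lemma lin_id (A : 'M[F]_2) (p : V) : e1 *m A = e1 -> p 0 1 != 0 -> p *m A = p ->
  forall v : V, v *m A = v.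
Proof.
move=> he hp hpA v; have [a [b ->]] := decomp v hp.
by rewrite mulmxDl -!scalemxAl he hpA.
Qed.

Lemma unit_first (d : V) : d != 0 -> exists A : 'M[F]_2, A \in unitmx /\ e1 *m A = d.
Proof.
move=> dn0.
pose c : V := if d 0 0 != 0 then delta_mx 0 1 else e1.
pose A : 'M[F]_2 := \matrix_(i, j) (if i == 0 then d 0 j else c 0 j).
exists A; split.
  rewrite unitmxE det2 !mxE /= unitfE /c.
  case: ifP => h; rewrite !mxE /=.
    by rewrite mulr1 mulr0 subr0.
  move/negbFE: h => /eqP h; rewrite h mul0r sub0r mulr1 oppr_eq0.
  apply: contra dn0 => /eqP h1; apply/eqP/rowP => j; rewrite mxE.
  by case: (ord2 j) => ->.
apply/rowP => j; rewrite /e1 -rowE mxE mxE /=.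
by [].
Qed.


Lemma cardW : #|[set v : V | v 0 1 != 0]| = (#|F| ^ 2 - #|F|)%N.
Proof.
have e : ~: [set v : V | v 0 1 != 0] = (fun a : F => a *: e1) @: [set: F].
  apply/setP => v; rewrite !inE negbK; apply/eqP/imsetP.
    by move=> h; exists (v 0 0); rewrite ?inE // -decomp0.
  by case=> a _ ->; rewrite mxE e1_01 mulr0.
have ci : injective (fun a : F => a *: e1).
  by move=> a b /rowP /(_ 0); rewrite !mxE /= !mulr1.
have := cardsC [set v : V | v 0 1 != 0]; rewrite e card_imset // cardsT card_mx.
by move=> <-; rewrite addnK.
Qed.

End Lin.

Section Grp.
Variable F : finFieldType.
Local Notation V := 'rV[F]_2.
Local Notation e1 := (e1 F).
Local Open Scope ring_scope.
Local Open Scope group_scope.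

Definition Kset : {set {perm V}} := [set s : {perm V} | (s 0%R == 0%R) && (s e1 == e1)].

Lemma Kset_gs : group_set Kset.
Proof.
apply/group_setP; split; first by rewrite inE !perm1 !eqxx.
move=> s t; rewrite !inE => /andP [/eqP h1 /eqP h2] /andP [/eqP h3 /eqP h4].
by rewrite !permM h1 h2 h3 h4 !eqxx.
Qed.
Canonical Kgroup := Group Kset_gs.

Lemma AGL2_gs : group_set (AGL2 F).
Proof.
apply/group_setP; split.
  rewrite inE; apply/existsP; exists 1%:M; apply/existsP; exists 0%R.
  rewrite unitmx1 /=; apply/forallP => x; by rewrite perm1 mulmx1 addr0.
move=> s t; rewrite !inE => /existsP [A /existsP [b /andP [uA /forallP hs]]].
move=> /existsP [A' /existsP [b' /andP [uA' /forallP ht]]].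
apply/existsP; exists (A *m A'); apply/existsP; exists (b *m A' + b')%R.
rewrite unitmx_mul uA uA' /=; apply/forallP => x.
by rewrite permM (eqP (hs x)) (eqP (ht _)) mulmxDl mulmxA addrA.
Qed.
Canonical AGLgroup := Group AGL2_gs.

Definition Rg := (AGLgroup :&: Kgroup)%G.

Lemma R_lin s : s \in Rg -> exists A : 'M[F]_2, (forall x, s x = x *m A) /\ e1 *m A = e1.
Proof.
rewrite !inE => /andP [/existsP [A /existsP [b /andP [_ /forallP hs]]] /andP [/eqP h0 /eqP h1]].
have b0 : b = 0%R by move: (eqP (hs 0%R)); rewrite h0 mul0mx add0r.
exists A; split => [x|]; first by rewrite (eqP (hs x)) b0 addr0.
by move: (eqP (hs e1)); rewrite h1 b0 addr0.
Qed.

Lemma R_fix s (p : V) : s \in Rg -> p 0%R 1%R = 0%R -> s p = p.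
Proof.
case/R_lin => A [hs he] hp; rewrite hs (decomp0 hp) -scalemxAl he //.
Qed.

Lemma R_free s (p : V) : s \in Rg -> p 0%R 1%R != 0%R -> s p = p -> s = 1.
Proof.
case/R_lin => A [hs he] hp hsp; apply/permP => v; rewrite perm1 hs.
have hpA : p *m A = p by rewrite -hs.
exact: (lin_id he hp hpA).
Qed.

Lemma two_trans g : exists2 h, h \in AGL2 F & h * g \in Kset.
Proof.
set p := (g^-1)%g 0%R; set p' := (g^-1)%g e1.
have dn0 : (p' - p)%R != 0%R.
  rewrite subr_eq0; apply/eqP => /perm_inj e; move: (e1_neq0 F); by rewrite e eqxx.
have [A [uA hA]] := unit_first dn0.
have inj : injective (fun x : V => x *m A + p)%R.
  move=> x y /= /addIr /(congr1 (mulmx^~ (invmx A))); rewrite !mulmxK //.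
exists (perm inj).
  rewrite inE; apply/existsP; exists A; apply/existsP; exists p; rewrite uA /=.
  by apply/forallP => x; rewrite permE.
by rewrite inE !permM !permE /= mul0mx add0r hA subrK /p /p' !permKV !eqxx.
Qed.

Definition W := [set v : V | v 0%R 1%R != 0%R].

Lemma W_iff s : s \in Rg -> s != 1 -> forall p, (p \in W) = (s p != p).
Proof.
move=> sR s1 p; rewrite inE; case: (boolP (p 0%R 1%R != 0%R)) => hp.
  by apply/esym/negP => /eqP /(R_free sR hp) e; move: s1; rewrite e eqxx.
by move/negbNE/eqP: hp => hp; rewrite (R_fix sR hp) eqxx.
Qed.

Lemma CL u : u ^+ 2 \in Rg -> u ^+ 2 != 1 -> u ^+ 4 = 1 -> (4 %| #|W|)%N.
Proof.
move=> sR s1 u4; set sg := u ^+ 2 in sR s1.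
have hW := W_iff sR s1.
have comm p : sg (u p) = u (sg p).
  by rewrite -!permM /sg -expgSr -expgS.
have nW : u \in 'N(W | 'P).
  apply/astabsP => p /=; rewrite ?apermE !hW comm; by rewrite (inj_eq perm_inj).
have acts : [acts <[u]>, on W | 'P] by rewrite cycle_subG.
have ou : #[u] = 4%N.
  have d4 : (#[u] %| 4)%N by rewrite order_dvdn u4.
  have d2 : ~~ (#[u] %| 2)%N by rewrite order_dvdn.
  move: (order_gt0 u) d4 d2 (dvdn_leq (isT : (0 < 4)%N) d4).
  by case: #[u] => [|[|[|[|[|n]]]]].
have stab p : p \in W -> 'C_<[u]>[p | 'P] = 1.
  move=> pW; apply/trivgP/subsetP => v; rewrite inE => /andP [vu].
  move/astab1P => /= vp; rewrite apermE in vp.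
  have [i ilt ev] := cyclePmin vu; move: ilt vp; rewrite ev ou inE; clear ev.
  have sgp : sg p != p by rewrite -hW.
  case: i => [|[|[|[|//]]]] _ /=; rewrite ?expg0 ?eqxx //.
  - rewrite expg1 => up; move: sgp; rewrite /sg expgS expg1 permM up up eqxx //.
  - by move=> e; move: sgp; rewrite /sg e eqxx.
  - move=> e; move: sgp; rewrite /sg.
    have : u p = p by rewrite -{1}e -permM -expgSr u4 perm1.
    by move=> up; rewrite expgS expg1 permM up up eqxx.
rewrite -(acts_sum_card_orbit acts) (eq_bigr (fun _ => 4%N)).
  by rewrite sum_nat_const dvdn_mull.
move=> T /imsetP [p pW ->]; rewrite card_orbit stab // indexg1.
by rewrite -orderE ou.
Qed.

Lemma ar4 q : (q %% 4 = 3)%N -> ~~ (4 %| q ^ 2 - q)%N.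
Proof. move=> h; rewrite (divn_eq q 4) h /dvdn; lia. Qed.

Lemma INV_R (hq : (#|F| %% 4 = 3)%N) (x : {perm V}) : x \notin Rg -> x^-1 \in dc Rg x ->
  exists2 t, t \in dc Rg x & t * t = 1.
Proof.
move=> _ /imset2P [r1 r2 r1R r2R e].
set y := x * r1.
have yD : y \in dc Rg x by have := mem_dc x (group1 Rg) r1R; rewrite mul1g.
have yV : y^-1 = x * r2 by rewrite /y invMg e !mulgA mulVg mul1g.
have yyR : y ^+ 2 \in Rg.
  rewrite expgS expg1 -{1}[y]invgK yV /y invMg -mulgA mulKg.
  by rewrite groupM ?groupV.
have cyR : <[y ^+ 2]> \subset Rg by rewrite cycle_subG.
set w := y.`_((2%N)^').
have wR : w \in Rg.
  have w2R : w ^+ 2 \in Rg.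
    by rewrite /w -consttX; apply: (subsetP cyR); apply: cycle_constt.
  have ow : odd #[w].
    have := p_elt_constt ((2%N)^') y; rewrite /p_elt -/w p'natE // dvdn2 negbK //.
  have -> : w = (w ^+ 2) ^+ (#[w].+1./2).
    rewrite -expgM; have -> : (2 * (#[w].+1)./2 = #[w].+1)%N by rewrite mul2n even_halfK //= ow.
    by rewrite expgS expg_order mulg1.
  exact: groupX.
set z := y.`_(2%N).
have ez : z = y * w^-1 by rewrite -(consttC (2%N) y) mulgK.
have zD : z \in dc Rg x by rewrite ez; exact: (dcMr yD (groupVr wR)).
have z2R : z ^+ 2 \in Rg.
  by rewrite /z -consttX; apply: (subsetP cyR); apply: cycle_constt.
case: (boolP (z * z == 1)) => [/eqP zz|zz]; first by exists z.
exfalso.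
have z2 : z ^+ 2 != 1 by rewrite expgS expg1.
have [k ok] := p_natP (p_elt_constt (2%N) y); rewrite -/z in ok.
case: k ok => [|[|j]] ok.
- by move: z2; rewrite -order_dvdn ok.
- by move: z2; rewrite -order_dvdn ok.
set u := z ^+ (2 ^ j).
have u2R : u ^+ 2 \in Rg by rewrite /u -expgM mulnC expgM groupX.
have u21 : u ^+ 2 != 1.
  by rewrite /u -expgM -order_dvdn ok -expnSr dvdn_Pexp2l // ltnn.
have u4 : u ^+ 4 = 1.
  by apply/eqP; rewrite /u -expgM -order_dvdn ok -[4%N]/(2 ^ 2)%N -expnD addn2.
have := CL u2R u21 u4; rewrite cardW.
by move/negP: (ar4 hq).
Qed.

End Grp.

Theorem theorem1p7 (q : nat) (F : finFieldType) :
  #|F| = q -> (q %% 4 = 3)%N ->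
  subgroup_perfect_code [set: {perm 'rV[F]_2}] (AGL2 F).
Proof.
move=> hF hq; rewrite -hF in hq.
have sRK : Rg F \subset Kgroup F by apply: subsetIr.
have [T [sTK TV T1 TR]] := @perfect_transversal _ (Rg F) (@INV_R F hq) (Kgroup F) sRK.
exists (T :\ 1%g); split.
  split.
    by apply/subsetP => s; rewrite !in_setD1 in_setT => /andP [-> _].
  by move=> s; rewrite !in_setD1 => /andP [s1 sT]; rewrite invg_eq1 s1 TV.
split.
- exact: subsetT.
- move=> c1 c2 c1H c2H; rewrite /cay_adj in_setD1; apply/negP => /andP [t1 tT].
  have tR : (c2 * c1^-1)%g \in Rg F.
    by rewrite in_setI groupM ?groupV // (subsetP sTK).
  by move: t1; rewrite (TR _ tT tR) eqxx.
- move=> g; rewrite in_setD in_setT andbT => gH.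
  have [h hH hk] := two_trans (g^-1)%g.
  set k := (h * g^-1)%g in hk.
  have [t0 et0] := cards1P (introT eqP (T1 k hk)).
  have t0T : t0 \in T by have := set11 t0; rewrite -et0 in_setI => /andP [].
  have t0k : t0 \in (Rg F :* k)%g by have := set11 t0; rewrite -et0 in_setI => /andP [].
  have t0kR : (t0 * k^-1)%g \in Rg F by rewrite -mem_rcoset.
  have t0kH : (t0 * k^-1)%g \in AGL2 F by move: t0kR; rewrite in_setI => /andP [].
  apply/eqP/cards1P; exists (t0 * g)%g; apply/setP => c; rewrite in_set1 in_set /cay_adj in_setD1.
  apply/idP/idP.
    case/andP => cH /andP [_ cT].
    have cK : (c * g^-1)%g \in Kgroup F by apply: (subsetP sTK).
    have ck : (c * g^-1)%g \in (Rg F :* k)%g.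
      rewrite mem_rcoset in_setI; apply/andP; split.
        by rewrite /k invMg invgK mulgA mulgKV groupM ?groupV.
      by rewrite groupM ?groupV // (subsetP sRK) ?(subsetP (subsetIr _ _) _ hk).
    have : (c * g^-1)%g \in T :&: (Rg F :* k)%g by rewrite in_setI cT ck.
    by rewrite et0 in_set1 => /eqP <-; rewrite mulgKV.
  move/eqP => ->; rewrite mulgK t0T andbT.
  have -> : (t0 * g = (t0 * k^-1) * h)%g by rewrite /k invMg invgK !mulgA mulgKV.
  rewrite groupM //=.
  apply/eqP => t01; move: t0kH; rewrite t01 mul1g groupV /k => hg.
  have : ((g^-1)%g \in AGL2 F) by rewrite -(mulKg h (g^-1)%g) groupM ?groupV.
  by rewrite groupV (negPf gH).
Qed.
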